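(* Let $N=(S,E,F,I)$ be a pure 1-occurrence Petri net. For a place $s$ let $s^\bullet=\{t\in E\mid F(s,t)>0\}$ and ${}^\bullet s=\{t\in E\mid F(t,s)>0\}$; for a finite $Y\subseteq E$ let ${}^\bullet Y(s)=\sum_{t\in Y}F(s,t)$, and for $X\subseteq E$ let $X^\bullet(s)=\sum_{t\in X}F(t,s)$. For $n\in\mathbb{Z}$ let ${}^n s=\{X\subseteq{}^\bullet s\mid X^\bullet(s)\ge n\}$ and $\varphi^n_s=\bigvee_{X\in{}^n s}\bigwedge X$. Let $T(N)$ be the set of all formulae $\bigwedge Y\Rightarrow\varphi_s^{\,{}^\bullet Y(s)-I(s)}$ with $s\in S$ and $Y$ a finite subset of $s^\bullet$. Then a finite set $X\subseteq E$ is a model of $T(N)$ if and only if $X$ is a configuration of $N$.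
   Context: A Petri net $(S,E,F,I)$ has places $S$, transitions $E$ (disjoint), $F:(S\times E\cup E\times S)\to\mathbb{N}$, $I:S\to\mathbb{N}$. For a finite multiset $X$ of transitions, ${}^\bullet X(s)=\sum_t F(s,t)X(t)$, $X^\bullet(s)=\sum_t X(t)F(t,s)$, and $X$ is a configuration iff $I-{}^\bullet X+X^\bullet\ge 0$ pointwise. A 1-occurrence net is one in which every configuration is a set; a net is pure if no $s,t$ have both $F(s,t)>0$ and $F(t,s)>0$. A model of a set of infinitary propositional formulae over $E$ is a subset of $E$ (the true variables) satisfying all of them. *)

(* Defs.v *)
From mathcomp Require Import all_boot all_order all_algebra.
Set Implicit Arguments. Unset Strict Implicit. Unset Printing Implicit Defensive.
Import Order.TTheory GRing.Theory Num.Theory.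

Section PetriNets.
Variables (S : Type) (E : eqType).
Variables (pre : S -> E -> nat) (post : E -> S -> nat) (I : S -> nat).
(* pre s t = F(s,t), post t s = F(t,s); places and transitions are disjoint
   since they live in different types. *)

(* A finite multiset of transitions is represented by a list (multiplicity = count). *)
Definition preset (X : seq E) (s : S) : nat := \sum_(t <- X) pre s t.
Definition postset (X : seq E) (s : S) : nat := \sum_(t <- X) post t s.

Definition configuration (X : seq E) : Prop :=
  forall s, (0 <= (I s)%:Z - (preset X s)%:Z + (postset X s)%:Z)%R.

Definition one_occurrence : Prop := forall X : seq E, configuration X -> uniq X.

Definition pure : Prop := forall s t, ~ (0 < pre s t /\ 0 < post t s).

Inductive form : Type :=
| FVar : E -> form
| FConj : forall J : Type, (J -> form) -> form
| FDisj : forall J : Type, (J -> form) -> form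
| FImp : form -> form -> form.

Fixpoint sat (M : E -> Prop) (phi : form) : Prop :=
  match phi with
  | FVar t => M t
  | FConj J f => forall j, sat M (f j)
  | FDisj J f => exists j, sat M (f j)
  | FImp a b => sat M a -> sat M b
  end.

Definition bigconj (X : E -> Prop) : form :=
  FConj (fun t : {t : E | X t} => FVar (proj1_sig t)).

Definition post_place (s : S) : E -> Prop := fun t => 0 < pre s t.
Definition pre_place (s : S) : E -> Prop := fun t => 0 < post t s.

(* X^bullet(s) >= n for a possibly infinite X (sum in N \cup {oo}):
   holds iff some finite partial sum reaches n. *)
Definition postsum_ge (X : E -> Prop) (s : S) (n : int) : Prop :=
  exists l : seq E, uniq l /\ (forall t, t \in l -> X t) /\
    (n <= (\sum_(t <- l) post t s)%:Z)%R.

Definition upper_sets (s : S) (n : int) (X : E -> Prop) : Prop :=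
  (forall t, X t -> pre_place s t) /\ postsum_ge X s n.

Definition phi_s (s : S) (n : int) : form :=
  FDisj (fun X : {X : E -> Prop | upper_sets s n X} => bigconj (proj1_sig X)).

Definition theory (phi : form) : Prop :=
  exists (s : S) (Y : seq E), uniq Y /\ (forall t, t \in Y -> post_place s t) /\
    phi = FImp (bigconj (fun t => t \in Y))
               (phi_s s ((preset Y s)%:Z - (I s)%:Z)%R).

Definition model (T : form -> Prop) (M : E -> Prop) : Prop :=
  forall phi, T phi -> sat M phi.

End PetriNets.

(* Main.v *)
Require Import Defs.
From mathcomp Require Import all_boot all_order all_algebra.
From mathcomp Require Import zify.

Lemma sub_sum (E : eqType) (f : E -> nat) (l X : seq E) :
  uniq l -> uniq X -> (forall t, t \in l -> t \in X) ->
  (\sum_(t <- l) f t <= \sum_(t <- X) f t)%N.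
Proof.
move=> ul uX sub.
have P : perm_eq X (l ++ [seq t <- X | t \notin l]).
  apply: uniq_perm => //.
    rewrite cat_uniq ul filter_uniq // andbT /=.
    by apply/hasPn => t; rewrite mem_filter => /andP[].
  move=> t; rewrite mem_cat mem_filter.
  by case: (boolP (t \in l)) => [/sub -> //|_]; rewrite /=.
by rewrite (perm_big _ P) big_cat /= leq_addr.
Qed.

Lemma sum_filter (E : eqType) (g f : E -> nat) (X : seq E) :
  (forall t, ~~ (0 < g t)%N -> f t = 0%N) ->
  \sum_(t <- [seq t <- X | (0 < g t)%N]) f t = \sum_(t <- X) f t.
Proof.
move=> H; rewrite big_filter big_mkcond /=; apply: eq_bigr => t _.
by case: ifP => // /negbT /H ->.
Qed.

Theorem mainTheorem7 (S : Type) (E : eqType)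
  (pre : S -> E -> nat) (post : E -> S -> nat) (I : S -> nat) :
  pure pre post -> one_occurrence pre post I ->
  forall X : seq E, uniq X ->
    (model (theory pre post I) (fun t => t \in X) <-> configuration pre post I X).
Proof.
move=> _ _ X uX; split.
- move=> M s.
  set Y := [seq t <- X | (0 < pre s t)%N].
  have th : theory pre post I (FImp (bigconj (fun t => t \in Y))
               (phi_s post s ((preset pre Y s)%:Z - (I s)%:Z)%R)).
    exists s, Y; split; first by rewrite filter_uniq.
    by split => // t; rewrite mem_filter => /andP[].
  have := M _ th => /= H.
  have H1 : forall j : {t | t \in Y}, sval j \in X.
    by move=> -[t]; rewrite /= mem_filter => /andP[].
  case: (H H1) => -[Z [ZP [l [ul [lZ sl]]]]] HZ.
  have lX : forall t, t \in l -> t \in X by move=> t /lZ tZ; exact: (HZ (exist _ t tZ)).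
  have le := @sub_sum E (fun t => post t s) l X ul uX lX.
  have eY : preset pre Y s = preset pre X s.
    rewrite /preset /Y sum_filter // => t; by rewrite lt0n negbK => /eqP.
  clear HZ; move: sl; rewrite eY => sl.
  rewrite /postset; lia.
- move=> C phi [s [Y [uY [YP ->]]]] /= HY.
  set l := [seq t <- X | (0 < post t s)%N].
  have ZP : upper_sets post s ((preset pre Y s)%:Z - (I s)%:Z)%R
        (fun t => t \in X /\ (0 < post t s)%N).
    split; first by move=> t [].
    exists l; split; first by rewrite filter_uniq.
    split; first by move=> t; rewrite mem_filter => /andP[].
    have YX : forall t, t \in Y -> t \in X by move=> t tY; exact: (HY (exist _ t tY)).
    have le := @sub_sum E (fun t => pre s t) Y X uY uX YX.
    have eq : \sum_(t <- l) post t s = postset post X s.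
      rewrite /l sum_filter // => t; by rewrite lt0n negbK => /eqP.
    have := C s; rewrite eq /preset; lia.
  exists (exist _ _ ZP) => -[t [tX _]] //.
Qed.
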